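(* A linear code $C\subseteq\mathbb{F}_3^n$ is trifferent if and only if it is minimal.
   Context: A linear code $C\subseteq\mathbb{F}_3^n$ is trifferent if for any three distinct $x,y,z\in C$ there is a coordinate $i$ with $\{x_i,y_i,z_i\}=\mathbb{F}_3$. The support of $v$ is $\mathrm{supp}(v)=\{i: v_i\ne 0\}$. A linear code $C$ is minimal if for all $u,v\in C$, $\mathrm{supp}(u)\subsetneq\mathrm{supp}(v)$ implies $u=0$ (equivalently, every nonzero codeword has inclusion-minimal support among nonzero codewords). *)

(* Defs.v *)
From HB Require Import structures.
From mathcomp Require Import all_boot all_order all_algebra.
Set Implicit Arguments. Unset Strict Implicit. Unset Printing Implicit Defensive.
Import GRing.Theory.
Local Open Scope ring_scope.

Definition supp (n : nat) (v : 'rV['F_3]_n) : {set 'I_n} :=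
  [set i | v 0 i != 0].

Definition trifferent (n : nat) (C : {vspace 'rV['F_3]_n}) : Prop :=
  forall x y z : 'rV['F_3]_n, x \in C -> y \in C -> z \in C ->
    x != y -> y != z -> x != z ->
    exists i : 'I_n, [set x 0 i; y 0 i; z 0 i] = [set: 'F_3].

Definition minimal_code (n : nat) (C : {vspace 'rV['F_3]_n}) : Prop :=
  forall u v : 'rV['F_3]_n, u \in C -> v \in C ->
    supp u \proper supp v -> u = 0.

(* Main.v *)
Require Import Defs.
From mathcomp Require Import all_boot all_order all_algebra.
Import GRing.Theory.
Local Open Scope ring_scope.
Lemma F3cases (x : 'F_3) : [\/ x = 0, x = 1 | x = 2].
Proof.
case: x => [[|[|[|m]]] Hm] //.
- by apply: Or31; apply: val_inj.
- by apply: Or32; apply: val_inj.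
- by apply: Or33; apply: val_inj.
Qed.
Lemma set3E (p q r : 'F_3) : ([set p; q; r] == setT) = [&& p != q, q != r & p != r].
Proof.
apply/idP/idP.
- move/eqP=> H.
  have Hx : forall x, [|| x == p, x == q | x == r].
    by move=> x; have:= in_setT x; rewrite -H !inE orbA.
  move: (Hx 0) (Hx 1) (Hx 2).
  by case: (F3cases p)=> ->; case: (F3cases q)=> ->; case: (F3cases r)=> ->.
- move=> H; apply/eqP/setP=> x; rewrite !inE.
  by move: H; case: (F3cases x)=> ->; case: (F3cases p)=> ->; case: (F3cases q)=> ->; case: (F3cases r)=> ->.
Qed.
Lemma key1 (p q r : 'F_3) : ~~ [&& p != q, q != r & p != r] ->
  (((p - r) + (q - r) != 0) = ((p - r != 0) || (q - r != 0))) /\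
   ((p - r != 0) -> (q - r != 0) -> (p - r = q - r)).
Proof.
by case: (F3cases p)=> ->; case: (F3cases q)=> ->; case: (F3cases r)=> ->.
Qed.
Lemma key2 (p q : 'F_3) : [&& p != q - p, q - p != 0 & p != 0] -> q = 0.
Proof.
by case: (F3cases p)=> ->; case: (F3cases q)=> ->.
Qed.

Theorem theorem6p2 (n : nat) (C : {vspace 'rV['F_3]_n}) :
  trifferent C <-> minimal_code C.
Proof.
split.
- move=> Htr u v uC vC Hp.
  apply/eqP; apply: contraT => u0.
  have vuC : v - u \in C by rewrite memvB.
  have neq : supp u != supp v by move: Hp; rewrite properEneq => /andP[].
  have Hsub : supp u \subset supp v by move: Hp; rewrite properEneq => /andP[].
  have H1 : u != v - u.
    apply: contra neq => /eqP E; apply/eqP/setP => i.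
    have : v = u + u by rewrite {2}E addrC subrK.
    move=> ->; rewrite !inE !mxE.
    by case: (F3cases (u 0 i)) => ->.
  have H2 : v - u != 0.
    by apply: contra neq; rewrite subr_eq0 => /eqP ->.
  have [i Hi] := Htr _ _ _ uC vuC (mem0v C) H1 H2 u0.
  move/eqP: Hi; rewrite set3E !mxE => Hi.
  have ui : u 0 i != 0 by case/and3P: Hi.
  have : v 0 i != 0.
    by have := subsetP Hsub i; rewrite !inE; apply.
  by rewrite (key2 _ _ Hi) eqxx.
- move=> Hmin x y z xC yC zC xy yz xz.
  suff /existsP[i /eqP Hi] : [exists i, [set x 0 i; y 0 i; z 0 i] == setT] by exists i.
  apply: contraT => /existsPn H.
  have key i := key1 (x 0 i) (y 0 i) (z 0 i) ltac:(by rewrite -set3E; exact: H i).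
  have aC : x - z \in C by rewrite memvB.
  have bC : y - z \in C by rewrite memvB.
  have abC : (x - z) + (y - z) \in C by rewrite memvD.
  have hsupp : supp ((x - z) + (y - z)) = supp (x - z) :|: supp (y - z).
    by apply/setP => i; rewrite !inE !mxE; exact: (key i).1.
  have a0 : x - z != 0 by rewrite subr_eq0.
  have b0 : y - z != 0 by rewrite subr_eq0.
  have sa : supp (x - z) = supp ((x - z) + (y - z)).
    apply/eqP; have : ~~ (supp (x - z) \proper supp ((x - z) + (y - z))).
      by apply: contra a0 => /(Hmin _ _ aC abC) ->.
    by rewrite properEneq hsupp subsetUl andbT negbK.
  have sb : supp (y - z) = supp ((x - z) + (y - z)).
    apply/eqP; have : ~~ (supp (y - z) \proper supp ((x - z) + (y - z))).
      by apply: contra b0 => /(Hmin _ _ bC abC) ->.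
    by rewrite properEneq hsupp subsetUr andbT negbK.
  suff : x = y by move/eqP; rewrite (negbTE xy).
  have : x - z = y - z.
    apply/rowP => j.
    move: (congr1 (fun S : {set 'I_n} => j \in S) (etrans sa (esym sb))); rewrite /= !inE !mxE => E.
    have [k1 k2] := key j.
    case: (eqVneq (x 0 j - z 0 j) 0) => ha.
      rewrite ha eqxx /= in E *.
      by apply/esym/eqP; apply: negbFE; rewrite -E.
    by apply: k2 => //; rewrite -E.
  by move/(congr1 (fun w => w + z)); rewrite !subrK.
Qed.
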